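(* Let $n\ge1$, let $\mathcal X\subseteq\mathbb N^n$ be a finite Ferrers set, and let $\Pi:\mathcal X\to\mathbb R_{>0}$. Let $\tilde{\mathcal B}_{\mathcal X}$ be the set of functions $\Gamma:\mathcal X\to\mathbb R_{\ge0}$ that are componentwise non-increasing ($\Gamma(x)\ge\Gamma(x+e_i)$ whenever $x,x+e_i\in\mathcal X$) and satisfy $\sum_{x\in\mathcal X}\Pi(x)\Gamma(x)=1$. For each Ferrers subset $\mathcal A\subseteq\mathcal X$ define $\Gamma_{\mathcal A}(x)=\mathbf 1\{x\in\mathcal A\}/\sum_{y\in\mathcal A}\Pi(y)$. Then $\tilde{\mathcal B}_{\mathcal X}$ is the convex hull of $\{\Gamma_{\mathcal A}:\mathcal A\text{ a Ferrers subset of }\mathcal X\}$, and each such $\Gamma_{\mathcal A}$ is an extreme point of $\tilde{\mathcal B}_{\mathcal X}$.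
   Context: $e_i$ is the $i$-th unit vector of $\mathbb N^n$; $\le$ is componentwise. A set $\mathcal X\subseteq\mathbb N^n$ is a Ferrers set if $0\in\mathcal X$ and $x\in\mathcal X$, $y\in\mathbb N^n$, $y\le x$ imply $y\in\mathcal X$. *)

(* Defs.v *)
From HB Require Import structures.
From mathcomp Require Import all_boot all_order all_algebra.
From mathcomp Require Import finmap.
Set Implicit Arguments. Unset Strict Implicit. Unset Printing Implicit Defensive.
Import Order.TTheory GRing.Theory Num.Theory.
Local Open Scope ring_scope.
Local Open Scope fset_scope.

Definition pt (n : nat) := {ffun 'I_n -> nat}.

Definition pt0 (n : nat) : pt n := [ffun => 0%N].
Definition ptle (n : nat) (x y : pt n) : bool := [forall i, (x i <= y i)%N].
Definition ptsucc (n : nat) (x : pt n) (i : 'I_n) : pt n :=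
  [ffun j => (x j + (j == i))%N].

Definition ferrers (n : nat) (A : {fset pt n}) : Prop :=
  pt0 n \in A /\ forall x y : pt n, x \in A -> ptle y x -> y \in A.

Definition inBtilde (R : realFieldType) (n : nat) (X : {fset pt n})
    (Pi G : pt n -> R) : Prop :=
  (forall x, x \in X -> 0 <= G x) /\
  (forall x i, x \in X -> ptsucc x i \in X -> G (ptsucc x i) <= G x) /\
  \sum_(x <- X) Pi x * G x = 1.

Definition GammaA (R : realFieldType) (n : nat) (Pi : pt n -> R)
    (A : {fset pt n}) : pt n -> R :=
  fun x => (x \in A)%:R / \sum_(y <- A) Pi y.

Definition GammaFerrers (R : realFieldType) (n : nat) (X : {fset pt n})
    (Pi : pt n -> R) (F : pt n -> R) : Prop :=
  exists A : {fset pt n}, ferrers A /\ A `<=` X /\ F = GammaA Pi A.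

Definition in_conv_hull (R : realFieldType) (n : nat) (X : {fset pt n})
    (S : (pt n -> R) -> Prop) (G : pt n -> R) : Prop :=
  exists (k : nat) (lam : 'I_k -> R) (F : 'I_k -> pt n -> R),
    (forall j, 0 <= lam j) /\ \sum_(j < k) lam j = 1 /\
    (forall j, S (F j)) /\
    (forall x, x \in X -> G x = \sum_(j < k) lam j * F j x).

Definition extreme_point (R : realFieldType) (n : nat) (X : {fset pt n})
    (C : (pt n -> R) -> Prop) (G : pt n -> R) : Prop :=
  C G /\
  forall (G1 G2 : pt n -> R) (t : R), C G1 -> C G2 -> 0 < t < 1 ->
    (forall x, x \in X -> G x = (t * G1 x + (1 - t) * G2 x)%R) ->
    (forall x, x \in X -> G1 x = G x /\ G2 x = G x).

(* Main.v *)
Require Import Defs.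
From HB Require Import structures.
From mathcomp Require Import all_boot all_order all_algebra.
From mathcomp Require Import finmap.
From mathcomp Require Import ring lra.
Import Order.TTheory GRing.Theory Num.Theory.
Local Open Scope ring_scope.
Local Open Scope fset_scope.
Set Implicit Arguments. Unset Strict Implicit. Unset Printing Implicit Defensive.

Lemma in_sepf (T : choiceType) (X : {fset T}) (p : pred T) x :
  (x \in [fset y in X | p y]) = (x \in X) && p x.
Proof. by rewrite !inE. Qed.


Lemma ptle_trans (n : nat) (x y z : pt n) : ptle x y -> ptle y z -> ptle x z.
Proof.
move=> /forallP H1 /forallP H2; apply/forallP => i; exact: leq_trans (H1 i) (H2 i).
Qed.

Lemma ptle_refl (n : nat) (x : pt n) : ptle x x.
Proof. by apply/forallP. Qed.

Lemma ptle0 (n : nat) (x : pt n) : ptle (pt0 n) x.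
Proof. by apply/forallP => i; rewrite ffunE. Qed.

Lemma ptle_succ (n : nat) (x : pt n) i : ptle x (ptsucc x i).
Proof. by apply/forallP => j; rewrite ffunE leq_addr. Qed.

Definition dist (n : nat) (y x : pt n) := (\sum_i (x i - y i))%N.

Lemma step_mono (R : realFieldType) (n : nat) (X : {fset pt n}) (G : pt n -> R) :
  ferrers X ->
  (forall x i, x \in X -> ptsucc x i \in X -> G (ptsucc x i) <= G x) ->
  forall x y, x \in X -> ptle y x -> G x <= G y.
Proof.
move=> [X0 Xd] Gm x y xX.
move: {2}(dist y x) (leqnn (dist y x)) => d.
elim: d y => [|d IH] y.
  rewrite leqn0 /dist sum_nat_eq0 => /forall_inP H /forallP yx.
  have -> : y = x by apply/ffunP => i; apply/eqP; rewrite eqn_leq yx /= -subn_eq0 H.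
  by [].
move=> dd yx.
case: (pickP (fun i => y i < x i)%N) => [i yi|].
  set z := ptsucc y i.
  have zx : ptle z x.
    apply/forallP => j; rewrite ffunE; case: eqP => [->|_]; first by rewrite addn1.
    by rewrite addn0; move/forallP: yx.
  have zX : z \in X by exact: Xd zx.
  have yX : y \in X by exact: Xd yx.
  apply: le_trans (IH z _ zx) (Gm y i yX zX).
  have: (dist z x).+1 = dist y x.
    rewrite /dist (bigD1 i) //= [X in _ = X](bigD1 i) //= ffunE eqxx addn1.
    rewrite -addSn subnSK //; congr (_ + _)%N; apply: eq_bigr => j ji.
    by rewrite ffunE (negbTE ji) addn0.
  by move=> E; rewrite -ltnS E.
move=> H; have -> : y = x.
  apply/ffunP => i; apply/eqP; rewrite eqn_leq; move/forallP: yx => ->.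
  by rewrite leqNgt H.
by [].
Qed.


Lemma seq_min (R : realFieldType) (T : eqType) (f : T -> R) (s : seq T) :
  s != [::] -> exists2 x, x \in s & forall y, y \in s -> f x <= f y.
Proof.
elim: s => // a s IH _; case: (altP (s =P [::])) => [->|sn].
  by exists a; rewrite ?mem_seq1 // => y; rewrite mem_seq1 => /eqP ->.
have [b bs Hb] := IH sn.
case: (leP (f a) (f b)) => ab.
  exists a; first by rewrite mem_head.
  move=> y; rewrite in_cons => /orP [/eqP ->//|/Hb]; exact: le_trans.
exists b; first by rewrite in_cons bs orbT.
move=> y; rewrite in_cons => /orP [/eqP ->|/Hb //]; exact: ltW.
Qed.

Lemma decomp (R : realFieldType) (n : nat) (X : {fset pt n}) : ferrers X ->
  forall H : pt n -> R, (forall x, x \in X -> 0 <= H x) ->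
  (forall x y, x \in X -> ptle y x -> H x <= H y) ->
  exists k (mu : 'I_k -> R) (A : 'I_k -> {fset pt n}),
    (forall j, 0 <= mu j) /\ (forall j, ferrers (A j) /\ A j `<=` X) /\
    forall x, x \in X -> H x = \sum_(j < k) mu j * (x \in A j)%:R.
Proof.
move=> [X0 Xd] H0 Hp Hm.
move: {2}(#|` [fset x in X | 0 < H0 x]|) (leqnn #|` [fset x in X | 0 < H0 x]|) => N.
elim: N H0 Hp Hm => [|N IH] H Hp Hm.
  rewrite leqn0 cardfs_eq0 => /eqP P0.
  exists 0%N, (fun _ => 0), (fun _ => fset0); split; first by case.
  split; first by case.
  move=> x xX; rewrite big_ord0; apply/eqP; rewrite eq_le Hp // andbT leNgt.
  apply/negP => Hx; have : x \in [fset x in X | 0 < H x] by rewrite in_sepf xX Hx.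
  by rewrite P0 inE.
set P := [fset x in X | 0 < H x] => cP.
have [P0|Pn] := eqVneq P fset0.
  apply: IH => //; move: P0; rewrite /P => ->; by rewrite cardfs0.
have [x0 x0P Hx0] : exists2 x, x \in P & forall y, y \in P -> H x <= H y.
  apply: seq_min; apply: contraNneq Pn => e; apply/eqP/fsetP => y.
  by rewrite inE -[y \in P]/(y \in enum_fset P) e.
have PX : P `<=` X by apply/fsubsetP => y; rewrite in_sepf => /andP[].
have Pfer : ferrers P.
  have x0X := fsubsetP PX _ x0P.
  have Hx0p : 0 < H x0 by move: x0P; rewrite in_sepf => /andP[].
  split; first by rewrite in_sepf X0 /=; apply: lt_le_trans Hx0p (Hm _ _ x0X (ptle0 _)).
  move=> x y; rewrite in_sepf => /andP[xX Hx] yx; rewrite in_sepf (Xd _ _ xX yx) /=.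
  exact: lt_le_trans Hx (Hm _ _ xX yx).
set m := H x0.
set H' := fun x => H x - m * (x \in P)%:R.
have PH z : z \in X -> (z \in P) = (0 < H z) by move=> zX; rewrite in_sepf zX.
have H'p : forall x, x \in X -> 0 <= H' x.
  move=> x xX; rewrite /H'; case: (boolP (x \in P)) => xP.
    by rewrite mulr1 subr_ge0 Hx0.
  by rewrite mulr0 subr0 Hp.
have H'm : forall x y, x \in X -> ptle y x -> H' x <= H' y.
  move=> x y xX yx; have yX := Xd _ _ xX yx; rewrite /H'.
  case: (boolP (x \in P)) => xP.
    have yP : y \in P by rewrite PH // (lt_le_trans _ (Hm _ _ xX yx)) // -PH.
    by rewrite yP !mulr1 lerD2r Hm.
  rewrite mulr0 subr0 [H x](_ : _ = 0); first exact: H'p.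
  by apply/eqP; rewrite eq_le Hp // andbT leNgt -PH.
have [k [mu [A [mu0 [AF HA]]]]] : exists k (mu : 'I_k -> R) (A : 'I_k -> {fset pt n}),
    (forall j, 0 <= mu j) /\ (forall j, ferrers (A j) /\ A j `<=` X) /\
    forall x, x \in X -> H' x = \sum_(j < k) mu j * (x \in A j)%:R.
  apply: (IH H' H'p H'm); rewrite -ltnS; apply: leq_trans cP.
  apply: fproper_ltn_card; rewrite fproperEneq; apply/andP; split.
    apply/negP => /eqP e.
    have : x0 \in [fset x in X | 0 < H' x] by rewrite e.
    by rewrite in_sepf /H' x0P mulr1 subrr ltxx andbF.
  apply/fsubsetP => y; rewrite in_sepf => /andP[yX Hy]; rewrite PH //.
  apply: lt_le_trans Hy _; rewrite /H' lerBlDr lerDl.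
  by rewrite mulr_ge0 ?ler0n // (le_trans _ (Hx0 _ x0P)) // ltW // -PH // (fsubsetP PX).
exists k.+1, (fun j => if unlift ord0 j is Some j' then mu j' else m),
  (fun j => if unlift ord0 j is Some j' then A j' else P).
split.
  move=> j; case: unlift => [j'|]; [exact: mu0 | exact: Hp (fsubsetP PX _ x0P)].
split; first by move=> j; case: unlift => [j'|]; [exact: AF | split].
move=> x xX; rewrite big_ord_recl unlift_none.
under eq_bigr => j _ do rewrite liftK.
by rewrite -HA // /H' addrC subrK.
Qed.


Lemma sum_sub (R : realFieldType) (n : nat) (X A : {fset pt n}) (f : pt n -> R) :
  A `<=` X -> \sum_(x <- X) f x * (x \in A)%:R = \sum_(x <- A) f x.
Proof.
move=> AX.
rewrite (eq_bigr (fun x => if x \in A then f x else 0)); last first.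
  by move=> x _; case: (x \in A); rewrite ?mulr1 ?mulr0.
rewrite -big_mkcond -big_filter; apply: perm_big; apply: uniq_perm.
- by rewrite filter_uniq // fset_uniq.
- exact: fset_uniq.
move=> x; rewrite mem_filter; case: (boolP (x \in A)) => //= xA.
by rewrite (fsubsetP AX).
Qed.

Lemma SA_pos (R : realFieldType) (n : nat) (X A : {fset pt n}) (Pi : pt n -> R) :
  ferrers A -> A `<=` X -> (forall x, x \in X -> 0 < Pi x) ->
  0 < \sum_(y <- A) Pi y.
Proof.
move=> [A0 _] AX Pp.
rewrite (bigD1_seq (pt0 n)) ?fset_uniq //=.
apply: lt_le_trans (Pp _ (fsubsetP AX _ A0)) _; rewrite lerDl.
rewrite big_seq_cond; apply: sumr_ge0 => x /andP[xA _].
exact: ltW (Pp _ (fsubsetP AX _ xA)).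
Qed.

Lemma gamma_in (R : realFieldType) (n : nat) (X A : {fset pt n}) (Pi : pt n -> R) :
  ferrers A -> A `<=` X -> (forall x, x \in X -> 0 < Pi x) ->
  inBtilde X Pi (GammaA Pi A).
Proof.
move=> AF AX Pp; have S0 := SA_pos AF AX Pp.
split; first by move=> x _; rewrite /GammaA divr_ge0 ?ler0n // ltW.
split.
  move=> x i _ _; rewrite /GammaA; apply: ler_wpM2r; first by rewrite invr_ge0 ltW.
  rewrite ler_nat.
  case: (boolP (ptsucc x i \in A)) => // sA.
  by rewrite (AF.2 _ _ sA (ptle_succ x i)).
under eq_bigr => x _ do rewrite /GammaA mulrA.
by rewrite -big_distrl /= sum_sub // divff // gt_eqF.
Qed.

Lemma psum_seq0 (R : realFieldType) (T : eqType) (r : seq T) (F : T -> R) :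
  (forall x, x \in r -> 0 <= F x) -> \sum_(x <- r) F x = 0 ->
  forall x, x \in r -> F x = 0.
Proof.
elim: r => // a r IH Hp; rewrite big_cons => /eqP.
have s0 : 0 <= \sum_(x <- r) F x.
  rewrite big_seq; apply: sumr_ge0 => x xr; apply: Hp; by rewrite in_cons xr orbT.
rewrite paddr_eq0 ?Hp ?mem_head // => /andP[/eqP Fa /eqP Fr] x.
rewrite in_cons => /orP[/eqP -> //|xr]; apply: IH => // y yr.
by apply: Hp; rewrite in_cons yr orbT.
Qed.

Lemma low0 (R : realFieldType) (n : nat) (X A : {fset pt n}) (Pi : pt n -> R) G :
  ferrers X -> ferrers A -> A `<=` X -> (forall x, x \in X -> 0 < Pi x) ->
  inBtilde X Pi G -> (forall x, x \in X -> x \notin A -> G x = 0) ->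
  \sum_(x <- A) Pi x * G x = 1 /\ (\sum_(y <- A) Pi y)^-1 <= G (pt0 n).
Proof.
move=> XF AF AX Pp [G0 [Gm Gs]] GA.
have S0 := SA_pos AF AX Pp.
have E : \sum_(x <- A) Pi x * G x = 1.
  rewrite -Gs -(sum_sub _ AX); apply: eq_big_seq => x xX.
  case: (boolP (x \in A)) => xA; first by rewrite mulr1.
  by rewrite GA // !mulr0.
split => //.
have : 1 <= \sum_(y <- A) Pi y * G (pt0 n).
  rewrite -E big_seq [X in _ <= X]big_seq; apply: ler_sum => x xA.
  have xX := fsubsetP AX _ xA.
  by apply: ler_wpM2l; [exact: ltW (Pp _ xX) | exact: (step_mono XF Gm xX (ptle0 x))].
rewrite -big_distrl /= => H.
by rewrite -(ler_pM2l S0) mulfV ?lt0r_neq0.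
Qed.

Lemma ext_aux (R : realFieldType) (n : nat) (X A : {fset pt n}) (Pi : pt n -> R)
  G1 G2 (t : R) :
  ferrers X -> ferrers A -> A `<=` X -> (forall x, x \in X -> 0 < Pi x) ->
  inBtilde X Pi G1 -> inBtilde X Pi G2 -> 0 < t < 1 ->
  (forall x, x \in X -> GammaA Pi A x = (t * G1 x + (1 - t) * G2 x)%R) ->
  forall x, x \in X -> G1 x = GammaA Pi A x.
Proof.
move=> XF AF AX Pp B1 B2 /andP[t0 t1] HG.
have S0 := SA_pos AF AX Pp.
set S := \sum_(y <- A) Pi y in S0.
have off : forall x, x \in X -> x \notin A -> G1 x = 0 /\ G2 x = 0.
  move=> x xX xA; move: (HG x xX); rewrite /GammaA (negbTE xA) mul0r => /esym/eqP.
  rewrite paddr_eq0 ?mulr_ge0 ?B1.1 ?B2.1 ?subr_ge0 ?ltW //.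
  by rewrite !mulf_eq0 (gt_eqF t0) subr_eq0 (gt_eqF t1) /= => /andP[/eqP -> /eqP ->].
have [E1 L1] := low0 XF AF AX Pp B1 (fun x xX xA => (off x xX xA).1).
have [_ L2] := low0 XF AF AX Pp B2 (fun x xX xA => (off x xX xA).2).
have A0 := AF.1; have X0 := fsubsetP AX _ A0.
have g0 : G1 (pt0 n) = S^-1.
  move: (HG _ X0); rewrite /GammaA A0 mul1r -/S.
  move: L1 L2; set a := G1 _; set b := G2 _; set c := S^-1 => L1 L2 E.
  apply/eqP; rewrite eq_le L1 andbT; nra.
have le1 : forall x, x \in A -> G1 x <= S^-1.
  move=> x xA; rewrite -g0; case: B1 => _ [Gm1 _].
  exact: (step_mono XF Gm1 (fsubsetP AX _ xA) (ptle0 x)).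
have sum0 : \sum_(x <- A) Pi x * (S^-1 - G1 x) = 0.
  under eq_bigr => x _ do rewrite mulrBr.
  by rewrite sumrB E1 -big_distrl /= -/S mulfV ?lt0r_neq0 // subrr.
move=> x xX; case: (boolP (x \in A)) => xA; last first.
  by rewrite (off x xX xA).1 /GammaA (negbTE xA) mul0r.
have := psum_seq0 _ sum0 xA.
have : forall y, y \in A -> 0 <= Pi y * (S^-1 - G1 y).
  by move=> y yA; rewrite mulr_ge0 ?subr_ge0 ?le1 // ltW // Pp // (fsubsetP AX).
move=> /[swap] /[apply] /eqP; rewrite mulf_eq0 (gt_eqF (Pp _ xX)) /= subr_eq0.
by move/eqP => <-; rewrite /GammaA xA mul1r.
Qed.

Unset Implicit Arguments.

Theorem mainTheorem9 (R : realFieldType) (n : nat) (X : {fset pt n})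
    (Pi : pt n -> R) :
  (1 <= n)%N -> ferrers X -> (forall x, x \in X -> 0 < Pi x) ->
  (forall G : pt n -> R,
     inBtilde X Pi G <-> in_conv_hull X (GammaFerrers X Pi) G) /\
  (forall A : {fset pt n}, ferrers A -> A `<=` X ->
     extreme_point X (inBtilde X Pi) (GammaA Pi A)).
Proof.
move=> _ XF Pp; split.
  move=> G; split.
    move=> [G0 [Gm Gs]].
    have [k [mu [A [mu0 [AF HA]]]]] := decomp XF G0 (step_mono XF Gm).
    exists k, (fun j => mu j * \sum_(y <- A j) Pi y), (fun j => GammaA Pi (A j)).
    have S0 j := SA_pos (AF j).1 (AF j).2 Pp.
    split; first by move=> j; rewrite mulr_ge0 ?mu0 // ltW.
    split.
      rewrite -Gs (eq_big_seq (fun x => \sum_(j < k) Pi x * (mu j * (x \in A j)%:R))); last first.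
        by move=> x xX; rewrite HA // mulr_sumr.
      rewrite exchange_big /=; apply: eq_bigr => j _.
      rewrite -(sum_sub _ (AF j).2) mulr_sumr; apply: eq_bigr => x _; ring.
    split; first by move=> j; exists (A j); split; [exact: (AF j).1 | split; [exact: (AF j).2|]].
    move=> x xX; rewrite HA //; apply: eq_bigr => j _; rewrite /GammaA.
    have := S0 j; move: (\sum_(y <- A j) Pi y) => s s0.
    by rewrite -mulrA [s * _]mulrCA mulfV ?lt0r_neq0 // mulr1.
  move=> [k [lam [F [lam0 [lam1 [HF HG]]]]]].
  have FB j : inBtilde X Pi (F j).
    by have [A [AF [AX ->]]] := HF j; exact: gamma_in.
  split.
    move=> x xX; rewrite HG //; apply: sumr_ge0 => j _; rewrite mulr_ge0 //.
    by case: (FB j) => + _; apply.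
  split.
    move=> x i xX sX; rewrite !HG //; apply: ler_sum => j _.
    apply: ler_wpM2l => //; by case: (FB j) => _ [+ _]; apply.
  rewrite (eq_big_seq (fun x => \sum_(j < k) lam j * (Pi x * F j x))); last first.
    by move=> x xX; rewrite HG // mulr_sumr; apply: eq_bigr => j _; ring.
  rewrite exchange_big /= -lam1; apply: eq_bigr => j _.
  by rewrite -mulr_sumr; case: (FB j) => _ [_ ->]; rewrite mulr1.
move=> A AF AX; split; first exact: gamma_in.
move=> G1 G2 t B1 B2 tt HG x xX; split.
  exact: ext_aux XF AF AX Pp B1 B2 tt HG x xX.
apply: (ext_aux XF AF AX Pp B2 B1 (t := 1 - t)).
- by move: tt => /andP[t0 t1]; apply/andP; split; lra.
- by move=> y yX; rewrite HG //; ring.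
- exact: xX.
Qed.
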